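(* Let $H$ be an oriented graph on $h$ vertices. Consider any labeling of the vertices of $H$ by $1,\dots,h$ and let $G$ be the corresponding backedge graph. Then for every order-preserving homomorphism $f:G\to K(H)$ there is a set $X\subseteq V(H)$ such that $f|_X$ is a graph isomorphism onto $K(H)$.
   Context: Graphs are undirected with vertex sets that are subsets of $\mathbb{N}$; subgraphs inherit labels. Given a labeling of $V(H)$ by $1,\dots,h$, the backedge graph of $H$ is the undirected graph on $[h]$ with $\{i,j\}$ an edge iff $i<j$ and $j\to i$ in $H$. An order-preserving homomorphism from $G$ to $G'$ is a map $f:V(G)\to V(G')$ with $f(i)\le f(j)$ whenever $i\le j$ and mapping edges to edges; an order-preserving isomorphism is one that is also a graph isomorphism. The ordered core of $G$ is a subgraph of $G$ with the fewest vertices among subgraphs to which $G$ has an order-preserving homomorphism. Let $\mathcal{C}(H)$ be the set of ordered cores of the backedge graphs of $H$ over all $h!$ labelings of $V(H)$ by $1,\dots,h$. $K(H)$ denotes a fixed element of $\mathcal{C}(H)$ that is maximal in the sense that for every $C\in\mathcal{C}(H)$, if there is an order-preserving homomorphism from $C$ to $K(H)$ then there is an order-preserving isomorphism between $C$ and $K(H)$. *)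

(* Defs.v *)
From HB Require Import structures.
From mathcomp Require Import all_boot.
From mathcomp Require Import finmap.

Set Implicit Arguments.
Unset Strict Implicit.
Unset Printing Implicit Defensive.

Local Open Scope fset_scope.

(* A graph with vertex set a finite subset of nat; edges given by a relation
   (only its restriction to the vertex set is meaningful). *)
Record graph := Graph { gV : {fset nat}; gE : rel nat }.

Definition subgraph (C G : graph) : Prop :=
  [/\ gV C `<=` gV G,
      (forall i j, gE C i j -> [/\ i \in gV C, j \in gV C & gE G i j]) &
      (forall i j, gE C i j = gE C j i)].

(* f (a total map on nat, only its values on V(G) matter) is an
   order-preserving homomorphism from G to G'. *)
Definition op_hom (G G' : graph) (f : nat -> nat) : Prop :=
  [/\ (forall i, i \in gV G -> f i \in gV G'),
      (forall i j, i \in gV G -> j \in gV G -> i <= j -> f i <= f j) &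
      (forall i j, i \in gV G -> j \in gV G -> gE G i j -> gE G' (f i) (f j))].

Definition op_homomorphic (G G' : graph) : Prop := exists f, op_hom G G' f.

Definition op_iso (G G' : graph) (f : nat -> nat) : Prop :=
  [/\ op_hom G G' f,
      {in gV G &, injective f},
      (forall k, k \in gV G' -> exists2 i, i \in gV G & f i = k) &
      (forall i j, i \in gV G -> j \in gV G -> gE G' (f i) (f j) -> gE G i j)].

Definition op_isomorphic (G G' : graph) : Prop := exists f, op_iso G G' f.

Definition is_ordered_core (C G : graph) : Prop :=
  [/\ subgraph C G, op_homomorphic G C &
      forall S, subgraph S G -> op_homomorphic G S -> #|` gV C| <= #|` gV S|].

(* an oriented graph on a finite vertex type T, arcs given by a : x -> y *)
Definition oriented (T : finType) (a : rel T) : Prop :=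
  irreflexive a /\ (forall x y, a x y -> ~~ a y x).

Definition labeling (T : finType) (lab : T -> nat) : Prop :=
  injective lab /\ (forall x, 0 < lab x <= #|T|).

(* backedge graph: on [h], {i,j} edge iff i < j and j -> i in H *)
Definition backedge (T : finType) (a : rel T) (lab : T -> nat) : graph :=
  Graph [fset i | i in iota 1 #|T|]
    (fun i j => [exists x, exists y,
       (lab x == i) && (lab y == j) &&
       (((i < j) && a y x) || ((j < i) && a x y))]).

Definition in_cores (T : finType) (a : rel T) (C : graph) : Prop :=
  exists lab, labeling lab /\ is_ordered_core C (backedge a lab).

(* K is a maximal element of C(H) in the sense of K(H) *)
Definition maximal_core (T : finType) (a : rel T) (K : graph) : Prop :=
  in_cores a K /\
  (forall C, in_cores a C -> op_homomorphic C K -> op_isomorphic C K).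

(* Main.v *)
Require Import Defs.
From HB Require Import structures.
From mathcomp Require Import all_boot.
From mathcomp Require Import finmap.
From Stdlib Require Import Classical.

Local Open Scope fset_scope.

Lemma core_exists_aux (G : graph) n : forall S, #|` gV S| <= n ->
  subgraph S G -> op_homomorphic G S -> exists C, is_ordered_core C G.
Proof.
elim: n => [|n IH] S HS sSG hGS.
  exists S; split => // S' _ _; by rewrite (leq_trans HS).
case: (classic (exists S', [/\ subgraph S' G, op_homomorphic G S' &
   #|` gV S'| < #|` gV S|])) => [[S' [s1 h1 lt1]]|nS].
  apply: (IH S') => //; by rewrite -ltnS (leq_trans lt1).
exists S; split => // S' s1 h1; rewrite leqNgt; apply/negP => lt1.
by apply: nS; exists S'.
Qed.

Lemma rigid (G C K : graph) (g f : nat -> nat) :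
  is_ordered_core C G -> op_iso C K g -> op_hom C K f -> {in gV C, f =1 g}.
Proof.
move=> [[subV edgeCG symC] [r [rV rle redge]] minC]
  [[gV_ gle gedge] ginj gsurj grefl] [fV fle fedge].
pose ginv k := head 0 [seq i <- enum_fset (gV C) | g i == k].
have Hginv k : k \in gV K -> ginv k \in gV C /\ g (ginv k) = k.
  move=> /gsurj [i iV gik].
  have : i \in [seq i <- enum_fset (gV C) | g i == k] by rewrite mem_filter gik eqxx.
  rewrite /ginv; case E: [seq i <- enum_fset (gV C) | g i == k] => [|h t] //= _.
  have : h \in [seq i <- enum_fset (gV C) | g i == k] by rewrite E inE eqxx.
  by rewrite mem_filter => /andP [/eqP -> hV].
have grefl_le i j : i \in gV C -> j \in gV C -> g i <= g j -> i <= j.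
  move=> iV jV gij; case: (leqP i j) => // ji.
  have gji := gle j i jV iV (ltnW ji).
  have eg : g i = g j by apply/eqP; rewrite eqn_leq gij gji.
  by move: (ginj i j iV jV eg) ji => ->; rewrite ltnn.
pose phi i := ginv (f i).
have phiV i : i \in gV C -> phi i \in gV C by move=> iV; case: (Hginv _ (fV i iV)).
have phig i : i \in gV C -> g (phi i) = f i by move=> iV; case: (Hginv _ (fV i iV)).
have phile i j : i \in gV C -> j \in gV C -> i <= j -> phi i <= phi j.
  move=> iV jV ij; apply: grefl_le; rewrite ?phiV // !phig //; exact: fle.
have phiedge i j : i \in gV C -> j \in gV C -> gE C i j -> gE C (phi i) (phi j).
  move=> iV jV e; apply: grefl; rewrite ?phiV // !phig //; exact: fedge.
pose I := phi @` gV C.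
have IV : I `<=` gV C.
  apply/fsubsetP => k /imfsetP [i /= iV ->]; exact: phiV.
pose S := Graph I (fun u v => [&& gE C u v, u \in I & v \in I]).
have sSG : subgraph S G.
  split => /=.
  - exact: fsubset_trans IV subV.
  - by move=> i j /and3P [e iI jI]; split => //; case: (edgeCG i j e).
  - by move=> i j; rewrite symC; case: (i \in I); case: (j \in I); rewrite ?andbT ?andbF.
have hGS : op_homomorphic G S.
  exists (fun i => phi (r i)); split => /=.
  - move=> i iV; apply/imfsetP; exists (r i) => //; exact: rV.
  - by move=> i j iV jV ij; apply: phile; rewrite ?rV //; apply: rle.
  - move=> i j iV jV e; have e' := redge i j iV jV e.
    have [riV rjV _] := edgeCG _ _ e'.
    rewrite phiedge //=; apply/andP; split; apply/imfsetP; by [exists (r i) | exists (r j)].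
have cardle := minC S sSG hGS.
have cardeq : #|` I| = #|` gV C|.
  by apply/eqP; rewrite eqn_leq fsubset_leq_card.
have phiinj : {in gV C &, injective phi}.
  by apply/card_in_imfsetP; rewrite cardeq.
have IE : I = gV C.
  by apply/eqP; rewrite eqEfcard IV /= cardeq.
have fix_ i : i \in gV C -> phi i = i.
  elim/ltn_ind: i => i IH iV.
  case: (ltngtP (phi i) i) => // c.
  - have h := IH _ c (phiV _ iV).
    have := phiinj _ _ (phiV _ iV) iV h => e; by rewrite e ltnn in c.
  - have : i \in I by rewrite IE.
    move=> /imfsetP [j /= jV eij].
    case: (ltnP j i) => ji.
    + have := IH _ ji jV; rewrite -eij => e; by rewrite e ltnn in ji.
    + have := phile _ _ iV jV ji; rewrite -eij leqNgt c //.
move=> i iV; by rewrite -(phig i iV) fix_.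
Qed.

Lemma lab_onto (T : finType) (lab : T -> nat) i :
  labeling lab -> i \in iota 1 #|T| -> exists x, lab x = i.
Proof.
move=> [linj lrange] Hi.
have U : uniq (map lab (enum T)) by rewrite map_inj_uniq ?enum_uniq.
have Sb : {subset map lab (enum T) <= iota 1 #|T|}.
  move=> k /mapP [x _ ->]; rewrite mem_iota; case/andP: (lrange x) => h1 h2.
  by rewrite h1 add1n ltnS.
have Hsz : size (iota 1 #|T|) <= size (map lab (enum T)) by rewrite size_iota size_map -cardE.
have [_ E] := uniq_min_size U Sb Hsz.
by move: Hi; rewrite -E => /mapP [x _ ->]; exists x.
Qed.

Theorem proposition4p6 (T : finType) (a : rel T) (lab : T -> nat) (K : graph)
  (f : nat -> nat) :
  oriented a -> labeling lab -> maximal_core a K ->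
  op_hom (backedge a lab) K f ->
  exists X : {set T},
    [/\ {in X &, injective (fun x => f (lab x))},
        (forall k, k \in gV K -> exists2 x, x \in X & f (lab x) = k) &
        (forall x y, x \in X -> y \in X ->
           gE (backedge a lab) (lab x) (lab y) = gE K (f (lab x)) (f (lab y)))].
Proof.
move=> _ Hlab [_ maxK] [fV fle fedge].
set G := backedge a lab.
have labV x : lab x \in gV G.
  rewrite /G /= inE mem_iota; case/andP: (Hlab.2 x) => h1 h2.
  by rewrite h1 add1n ltnS.
have sGG : subgraph G G.
  split => //.
  - move=> i j e; have := e.
    move=> /existsP [x /existsP [y /andP [/andP [/eqP ex /eqP ey] _]]].
    by split => //; rewrite -?ex -?ey labV.
  - move=> i j; apply/existsP/existsP => [] [x /existsP [y /andP [/andP [e1 e2] e3]]];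
      exists y; apply/existsP; exists x; by rewrite e1 e2 orbC.
have hGG : op_homomorphic G G by exists id; split.
have [C HC] := @core_exists_aux G _ G (leqnn _) sGG hGG.
have HC' := HC; case: HC' => [[subV edgeCG symC] _ _].
have fC : op_hom C K f.
  split.
  - move=> i iV; apply: fV; exact: (fsubsetP subV).
  - move=> i j iV jV; apply: fle; exact: (fsubsetP subV).
  - move=> i j iV jV e; case: (edgeCG i j e) => _ _; apply: fedge; exact: (fsubsetP subV).
have [g Hg] := maxK C (ex_intro _ lab (conj Hlab HC)) (ex_intro _ f fC).
have fg := @rigid G C K g f HC Hg fC.
case: Hg => [_ ginj gsurj grefl].
exists [set x | lab x \in gV C]; split.
- move=> x y; rewrite !inE => xV yV; rewrite /= !fg // => e.
  exact: Hlab.1 (ginj _ _ xV yV e).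
- move=> k /gsurj [i iV <-].
  have : i \in iota 1 #|T|.
    by have := fsubsetP subV i iV; rewrite /G /= inE.
  move=> /(@lab_onto T lab i Hlab) [x lx]; exists x; rewrite ?inE lx //; exact: fg.
- move=> x y; rewrite !inE => xV yV; apply/idP/idP => [|e].
  + exact: fedge.
  + have := grefl _ _ xV yV; rewrite -!fg // => /(_ e) e'.
    by case: (edgeCG _ _ e').
Qed.
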